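(* The full subcategory $\overline{\mathcal{A}}_p(S)$ of $\mathcal{A}_p(S)$ is a semi-skeleton of $\mathcal{A}_p(S)$, and its number of objects is $\sum_{L\in\mathcal{L}}|H^1(L,T)|$.
   Context: Conventions: normalised cocycles $Z^n$, coboundaries $B^n$, cohomology $H^n$ for right modules written additively; $\mathrm{Ext}(\tau)$ is $G\times M$ with $(g,m)(h,n)=(gh,m^h+n+\tau(g,h))$. Setting: $S$ infinite pro-$p$-group of finite coclass; $T=\gamma_\ell(S)$ ($\ell$ large), $T\cong\mathbb{Z}_p^d$, $P=S/T$ finite, the series $T_0=T$, $T_{i+1}=[T_i,S]$ with all indices $p$; $T$ an additive $P$-module via conjugation; $S=\mathrm{Ext}(\rho)$, $\rho\in Z^2(P,T)$, $T=\{(1,t)\}$. For $L\leq P$, $\overline{L}$ is its full preimage in $S$. $\mathcal{L}$ = elementary abelian $L\leq P$ with $\rho_L\in B^2(L,T)$. For $L\in\mathcal{L}$ fix a complement $C_L=\{(l,t_L(l))\mid l\in L\}$ to $T$ in $\overline{L}$ and put $C_L(\delta)=\{(l,t_L(l)+\delta(l))\}$ for $\delta\in Z^1(L,T)$. Let $T^1(L,T)$ be a transversal of $B^1(L,T)$ in $Z^1(L,T)$. $\mathcal{A}_p(S)$ is the Quillen category (objects: elementary abelian subgroups of $S$; morphisms: injective homomorphisms induced by conjugation in $S$), and $\overline{\mathcal{A}}_p(S)$ is its full subcategory on the objects $C_L(\gamma)$ with $L\in\mathcal{L}$, $\gamma\in T^1(L,T)$. A semi-skeleton of a category is a full subcategory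 containing at least one object from each isomorphism class of objects. *)

(* Defs.v *)
From HB Require Import structures.
From mathcomp Require Import all_boot all_order all_algebra all_fingroup all_solvable.
From mathcomp Require Import boolp classical_sets cardinality.
Set Implicit Arguments. Unset Strict Implicit. Unset Printing Implicit Defensive.
Import GRing.Theory.
Local Open Scope ring_scope.
Local Open Scope classical_set_scope.

(* Z_p is modelled as the inverse limit of the Z/p^n: coherent sequences
   x : nat -> nat with x n < p^n and x (n+1) mod p^n = x n, with
   componentwise addition mod p^n. *)
Definition padic_seq (p : nat) (x : nat -> nat) : Prop :=
  forall n, (x n < p ^ n)%N /\ (x n.+1 %% p ^ n)%N = x n.

Definition iso_to_Zp_pow (p d : nat) (T : zmodType) : Prop :=
  exists f : T -> 'I_d -> nat -> nat,
    [/\ forall t i, padic_seq p (f t i),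
        injective f,
        (forall g : 'I_d -> nat -> nat, (forall i, padic_seq p (g i)) ->
            exists t, f t = g) &
        forall s t i n, f (s + t) i n = ((f s i n + f t i n) %% p ^ n)%N].

Definition right_module (gT : finGroupType) (T : zmodType) (act : T -> gT -> T) :=
  [/\ forall t, act t 1%g = t,
      forall t g h, act t (g * h)%g = act (act t g) h &
      forall g s t, act (s + t) g = act s g + act t g].

Section Ext.
Variables (gT : finGroupType) (T : zmodType) (act : T -> gT -> T).

(* normalised 2-cocycles Z^2(P,T) (P = the whole finite group gT) *)
Definition Z2 (rho : gT -> gT -> T) : Prop :=
  [/\ forall g h k, act (rho g h) k + rho (g * h)%g k = rho h k + rho g (h * k)%g,
      forall g, rho 1%g g = 0 &
      forall g, rho g 1%g = 0].

Definition B2 (L : {group gT}) (rho : gT -> gT -> T) : Prop :=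
  exists f : gT -> T, forall x y, x \in L -> y \in L ->
    rho x y = act (f x) y + f y - f (x * y)%g.

(* normalised 1-cocycles and 1-coboundaries of L with values in T
   (functions L -> T, extended by 0 outside L) *)
Definition Z1 (L : {group gT}) : set (gT -> T) :=
  [set d | (forall x y, x \in L -> y \in L -> d (x * y)%g = act (d x) y + d y)
           /\ (forall x, x \notin L -> d x = 0)].

Definition B1 (L : {group gT}) : set (gT -> T) :=
  [set d | (exists m : T, forall x, x \in L -> d x = act m x - m)
           /\ (forall x, x \notin L -> d x = 0)].

Definition H1 (L : {group gT}) : set (set (gT -> T)) :=
  [set C | exists2 d, Z1 L d &
     C = [set d' | Z1 L d' /\ B1 L (fun x => d' x - d x)]].

Variable rho : gT -> gT -> T.

(* the group S = Ext(rho), carrier gT * T *)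
Definition extmul (x y : gT * T) : gT * T :=
  ((x.1 * y.1)%g, act x.2 y.1 + y.2 + rho x.1 y.1).
Definition extone : gT * T := (1%g, 0).

Definition subgroupS (E : set (gT * T)) : Prop :=
  [/\ E extone,
      forall x y, E x -> E y -> E (extmul x y) &
      forall x, E x -> exists2 y, E y & extmul x y = extone].

Definition elemabS (p : nat) (E : set (gT * T)) : Prop :=
  [/\ subgroupS E, finite_set E,
      forall x y, E x -> E y -> extmul x y = extmul y x &
      forall x, E x -> iter p (extmul x) extone = extone].

(* morphisms of A_p(S): injective maps E -> E' induced by conjugation in S,
   phi x = s^-1 x s, i.e. s * phi x = x * s *)
Definition Amor (E E' : set (gT * T)) (phi : gT * T -> gT * T) : Prop :=
  [/\ forall x, E x -> E' (phi x),
      forall x y, E x -> E y -> phi x = phi y -> x = y &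
      exists s, forall x, E x -> extmul s (phi x) = extmul x s].

Definition Aiso (E E' : set (gT * T)) : Prop :=
  exists phi psi, [/\ Amor E E' phi, Amor E' E psi,
                      forall x, E x -> psi (phi x) = x &
                      forall y, E' y -> phi (psi y) = y].

Definition calL (p : nat) (L : {group gT}) : Prop := abelem p L /\ B2 L rho.

Definition CL (tL : {group gT} -> gT -> T) (L : {group gT}) (d : gT -> T)
  : set (gT * T) := [set x | x.1 \in L /\ x.2 = tL L x.1 + d x.1].

End Ext.

(* Main.v *)
Require Import Defs.
From HB Require Import structures.
From mathcomp Require Import all_boot all_order all_algebra all_fingroup all_solvable.
From mathcomp Require Import boolp classical_sets cardinality.
Set Implicit Arguments. Unset Strict Implicit.
Import GRing.Theory.
Local Open Scope ring_scope.
Local Open Scope classical_set_scope.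
Local Open Scope card_scope.
Lemma act0 (gT : finGroupType) (T : zmodType) (act : T -> gT -> T) g :
  right_module act -> act 0 g = 0.
Proof.
case=> _ _ aD; have := aD g 0 0; rewrite addr0 => e.
by apply: (addrI (act 0 g)); rewrite addr0 -e.
Qed.

Lemma actN (gT : finGroupType) (T : zmodType) (act : T -> gT -> T) s g :
  right_module act -> act (- s) g = - act s g.
Proof.
move=> RM; have [_ _ aD] := RM; apply/eqP; rewrite -subr_eq0 opprK -aD addNr.
by rewrite act0.
Qed.

Lemma actB (gT : finGroupType) (T : zmodType) (act : T -> gT -> T) s t g :
  right_module act -> act (s - t) g = act s g - act t g.
Proof. by move=> RM; have [_ _ aD] := RM; rewrite aD actN. Qed.

Lemma torsion p d (T : zmodType) : prime p -> iso_to_Zp_pow p d T ->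
  forall u : T, u *+ p = 0 -> u = 0.
Proof.
move=> pp [f [Hs Hinj _ Hadd]] u Hu.
have f0 i n : f 0 i n = 0%N.
  have [lt _] := Hs 0 i n.
  have := Hadd 0 0 i n; rewrite addr0 => e.
  move: lt e; set z := f 0 i n => lt e.
  have : (z + z == 0 + z %[mod p ^ n])%N.
    by rewrite -e add0n modn_small.
  by rewrite eqn_modDr mod0n modn_small // => /eqP.
have fm k i n : f (u *+ k) i n = (k * f u i n %% p ^ n)%N.
  elim: k => [|k IH]; first by rewrite mulr0n f0 mul0n mod0n.
  by rewrite mulrS Hadd IH modnDmr mulSn.
have pp0 : (0 < p)%N by apply: prime_gt0.
have z i n : f u i n = 0%N.
  have [_ e] := Hs u i n.
  have := fm p i n.+1; rewrite Hu f0 => /esym/eqP.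
  rewrite -/(dvdn _ _) expnS dvdn_pmul2l // => dv.
  by rewrite -e; apply/eqP; rewrite -/(dvdn _ _).
apply: Hinj; apply: funext => i; apply: funext => n; by rewrite z f0.
Qed.
Lemma swap4 (T : zmodType) (a b c d r : T) :
  a + b + (c + d) + r = (a + c + r) + (b + d).
Proof.
by rewrite addrACA (addrAC (a + c)).
Qed.

Lemma CL_mul (gT : finGroupType) (T : zmodType) (act : T -> gT -> T)
  (rho : gT -> gT -> T) (tL : {group gT} -> gT -> T) (L : {group gT}) g x y :
  right_module act ->
  subgroupS act rho (CL tL L (fun _ => 0)) -> Z1 act L g -> x \in L -> y \in L ->
  extmul act rho (x, tL L x + g x) (y, tL L y + g y)
  = ((x * y)%g, tL L (x * y)%g + g (x * y)%g).
Proof.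
move=> RM [_ Hm _] [Hg _] xL yL.
have := Hm (x, tL L x + 0) (y, tL L y + 0).
rewrite /CL /= => /(_ (conj xL erefl) (conj yL erefl)) [_].
rewrite !addr0 => e.
rewrite /extmul /=; congr pair.
have [_ _ aD] := RM.
by rewrite Hg // -e aD swap4.
Qed.

Lemma part1 p (gT : finGroupType) (T : zmodType) (act : T -> gT -> T)
  (rho : gT -> gT -> T) (tL : {group gT} -> gT -> T) (L : {group gT}) g :
  prime p -> right_module act -> calL act rho p L ->
  subgroupS act rho (CL tL L (fun _ => 0)) -> Z1 act L g ->
  elemabS act rho p (CL tL L g).
Proof.
move=> pp RM [HL _] H0 Hg.
have [ab expL] := abelemP pp HL.
have RM' := RM; case: RM' => a1 _ _.
have tL1 : tL L 1%g = 0.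
  by case: H0 => [[_ /= e] _ _]; rewrite e addr0.
have g1 : g 1%g = 0.
  have [Hc _] := Hg; have := Hc 1%g 1%g (group1 L) (group1 L).
  rewrite mulg1 a1 => e; apply: (addrI (g 1%g)); by rewrite addr0 -e.
have one : extone gT T = (1%g, tL L 1%g + g 1%g) by rewrite tL1 g1 addr0.
have itp x k : x \in L ->
  iter k (extmul act rho (x, tL L x + g x)) (extone gT T)
  = ((x ^+ k)%g, tL L (x ^+ k)%g + g (x ^+ k)%g).
  move=> xL; elim: k => [|k IH]; first by rewrite expg0.
  by rewrite iterS IH CL_mul // ?groupX // expgS.
split.
- split.
  + by rewrite one; split => //=; exact: group1.
  + move=> [x1 x2] [y1 y2] [/= xL ->] [/= yL ->].
    by rewrite CL_mul //; split => //=; exact: groupM.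
  + move=> [x1 x2] [/= xL ->]; exists (x1^-1, tL L x1^-1 + g x1^-1)%g.
      by split => //=; rewrite groupV.
    by rewrite CL_mul ?groupV // mulgV one.
- apply: (@sub_finite_set _ _ ((fun x => (x, tL L x + g x)) @` [set x | x \in L])).
    by move=> [x1 x2] [/= xL ->]; exists x1.
  exact: finite_image.
- move=> [x1 x2] [y1 y2] [/= xL ->] [/= yL ->].
  rewrite !CL_mul //.
  have cxy : commute x1 y1 by apply: (centsP ab).
  by rewrite cxy.
- move=> [x1 x2] [/= xL ->].
  by rewrite itp // expL // one.
Qed.
Lemma alg0 (T : zmodType) (s t g : T) : s - t - g = s - (t + g).
Proof. by rewrite opprD addrA. Qed.
Lemma alg1 (T : zmodType) (a s t g m : T) : s - t - g = a - m -> a + (t + g) = s + m.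
Proof.
move=> h; rewrite -(subrK m a) -h alg0 (addrAC (s - (t + g))) subrK //.
Qed.
Lemma alg2 (T : zmodType) (a s t g m : T) : s - t - g = a - m -> - a + s = t + g - m.
Proof.
move=> h; rewrite -(subrK m a) -h alg0 opprD opprB (addrAC (t + g - s)) subrK //.
Qed.
Lemma alg3 (T : zmodType) (A B C D r : T) : (A + B + r) - (C + D + r) = (A - C) + (B - D).
Proof. by rewrite (opprD (C + D)) addrACA subrr addr0 opprD addrACA. Qed.

Lemma iter_fst (gT : finGroupType) (T : zmodType) (act : T -> gT -> T)
  (rho : gT -> gT -> T) x k :
  (iter k (extmul act rho x) (extone gT T)).1 = (x.1 ^+ k)%g.
Proof. by elim: k => [|k IH] //=; rewrite IH expgS. Qed.

Lemma iter1 (gT : finGroupType) (T : zmodType) (act : T -> gT -> T)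
  (rho : gT -> gT -> T) (u : T) k :
  right_module act -> Z2 act rho ->
  iter k (extmul act rho (1%g, u)) (extone gT T) = (1%g, u *+ k).
Proof.
move=> [a1 _ _] [_ r1 _]; elim: k => [|k IH] //=.
by rewrite IH /extmul /= mulg1 a1 r1 addr0 mulrS.
Qed.

Lemma fiber p (gT : finGroupType) (T : zmodType) (act : T -> gT -> T)
  (rho : gT -> gT -> T) E x t t' :
  (forall u : T, u *+ p = 0 -> u = 0) ->
  right_module act -> Z2 act rho -> elemabS act rho p E ->
  E (x, t) -> E (x, t') -> t = t'.
Proof.
move=> tors RM Z2r [[E1 Em Ei] _ _ Ep] Ext Ext'.
have RM' := RM; case: RM' => a1 aM _.
have [[y1 y2] Ey ey] := Ei _ Ext.
have E2 := Em _ _ Ext' Ey.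
case: ey => /= e1 e2.
move/eqP: e2; rewrite -addrA addr_eq0 => /eqP e2.
have {}e2 : y2 + rho x y1 = - act t y1 by rewrite e2 opprK.
have : E (1%g, act (t' - t) y1).
  move: E2; rewrite /extmul /= e1 -addrA e2 actB //.
have yx : (y1 * x = 1)%g by rewrite -(mulg1_eq e1) mulVg.
move=> /Ep; rewrite iter1 // => -[] /tors e0.
apply/esym/eqP; rewrite -subr_eq0; apply/eqP.
by rewrite -(a1 (t' - t)) -yx aM e0 act0.
Qed.

Lemma part2 p d (gT : finGroupType) (T : zmodType) (act : T -> gT -> T)
  (rho : gT -> gT -> T) (tL : {group gT} -> gT -> T)
  (Tr : {group gT} -> set (gT -> T)) E :
  prime p -> iso_to_Zp_pow p d T -> right_module act -> Z2 act rho ->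
  (forall L : {group gT}, calL act rho p L ->
     subgroupS act rho (CL tL L (fun _ => 0))) ->
  (forall L : {group gT}, calL act rho p L ->
     Tr L `<=` Z1 act L /\
     forall dl, Z1 act L dl ->
       exists! g, Tr L g /\ B1 act L (fun x => dl x - g x)) ->
  elemabS act rho p E ->
  exists (L : {group gT}) g,
    [/\ calL act rho p L, Tr L g & Aiso act rho E (CL tL L g)].
Proof.
move=> pp iso RM Z2r H0 Htr HE.
have tors := torsion pp iso.
have RM' := RM; case: RM' => a1 aM aD.
have Z2' := Z2r; case: Z2' => _ r1l r1r.
pose Ls : {set gT} := [set x : gT | `[< exists t, E (x, t) >]]%SET.
have LsP x : reflect (exists t, E (x, t)) (x \in Ls).
  by rewrite /Ls inE; apply: asboolP.
have HE' := HE; case: HE' => [[E1 Em Ei] _ Ecomm Ep].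
have gs : group_set Ls.
  apply/group_setP; split; first by apply/LsP; exists 0; exact: E1.
  move=> x y /LsP[t Ext] /LsP[u Eyu]; apply/LsP.
  by exists (act t y + u + rho x y); exact: (Em _ _ Ext Eyu).
pose L := Group gs.
have LP x : reflect (exists t, E (x, t)) (x \in L) by exact: LsP.
pose s x := xget 0 [set t | E (x, t)].
have Es x : x \in L -> E (x, s x) by move/LP => ex; apply: xgetPex ex.
have EL x t : E (x, t) -> x \in L by move=> Ext; apply/LP; exists t.
have Eu x t : E (x, t) -> t = s x.
  by move=> Ext; apply: (fiber tors RM Z2r HE Ext (Es x (EL _ _ Ext))).
have mulS x y : x \in L -> y \in L -> act (s x) y + s y + rho x y = s (x * y)%g.
  by move=> xL yL; apply: Eu (Em _ _ (Es x xL) (Es y yL)).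
have HLc : calL act rho p L.
  split.
  - apply/(abelemP pp); split.
    + apply/centsP => x xL y yL.
      by have := Ecomm _ _ (Es x xL) (Es y yL); case.
    + move=> x xL; have := Ep _ (Es x xL) => /(congr1 fst).
      by rewrite iter_fst.
  - exists (fun x => - s x) => x y xL yL.
    by rewrite actN // -(mulS x y xL yL) opprK -opprD addKr.
have [_ Htr2] := Htr L HLc.
have tLm x y : x \in L -> y \in L ->
    act (tL L x) y + tL L y + rho x y = tL L (x * y)%g.
  move=> xL yL; have [_ Hm0 _] := H0 L HLc.
  have [_ /= e] := Hm0 (x, tL L x + 0) (y, tL L y + 0) (conj xL erefl) (conj yL erefl).
  by move: e; rewrite !addr0.
pose del x := if x \in L then s x - tL L x else 0.
have Zd : Z1 act L del.
  split; last by move=> x /negbTE; rewrite /del => ->.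
  move=> x y xL yL; rewrite /del xL yL groupM //.
  by rewrite -mulS // -tLm // actB // alg3.
have [g [[Trg [[m Hm] _]] _]] := Htr2 del Zd.
exists L, g; split => //.
have hm x : x \in L -> s x - tL L x - g x = act m x - m.
  by move=> xL; have := Hm x xL; rewrite /del xL.
exists (fun x => (x.1, tL L x.1 + g x.1)), (fun y => (y.1, s y.1)).
split.
- split.
  + by move=> [x1 x2] Ex /=; split => //=; exact: EL Ex.
  + move=> [x1 x2] [y1 y2] Ex Ey /= [e1 _]; move: Ey; rewrite -e1 => Ey.
    by rewrite (Eu _ _ Ex) (Eu _ _ Ey).
  + exists (1%g, m) => [[x1 x2]] Ex /=.
    rewrite /extmul /= mul1g mulg1 a1 r1l r1r !addr0 (Eu _ _ Ex); congr pair.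
    by apply: alg1; apply: hm; exact: EL Ex.
- split.
  + by move=> [y1 y2] [/= yL _]; exact: Es.
  + move=> [x1 x2] [y1 y2] [/= xL ->] [/= yL ->] /= [e1 _]; by rewrite e1.
  + exists (1%g, - m) => [[y1 y2]] [/= yL ->].
    rewrite /extmul /= mul1g mulg1 a1 r1l r1r !addr0 actN //; congr pair.
    by apply: alg2; apply: hm.
- by move=> [x1 x2] Ex /=; rewrite (Eu _ _ Ex).
- by move=> [y1 y2] [/= _ ->].
Qed.

Lemma B1refl (gT : finGroupType) (T : zmodType) (act : T -> gT -> T)
  (L : {group gT}) (a : gT -> T) :
  right_module act -> B1 act L (fun x => a x - a x).
Proof.
move=> RM; split; last by move=> x _; rewrite subrr.
by exists 0 => x _; rewrite act0 // !subrr.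
Qed.

Lemma B1sym (gT : finGroupType) (T : zmodType) (act : T -> gT -> T)
  (L : {group gT}) (a b : gT -> T) :
  right_module act -> B1 act L (fun x => a x - b x) -> B1 act L (fun x => b x - a x).
Proof.
move=> RM [[m Hm] Ho]; split; last by move=> x xL; rewrite -opprB Ho // oppr0.
exists (- m) => x xL; rewrite -opprB Hm // actN // opprB opprK addrC //.
Qed.

Lemma B1trans (gT : finGroupType) (T : zmodType) (act : T -> gT -> T)
  (L : {group gT}) (a b c : gT -> T) :
  right_module act -> B1 act L (fun x => a x - b x) ->
  B1 act L (fun x => b x - c x) -> B1 act L (fun x => a x - c x).
Proof.
move=> RM [[m1 Hm1] Ho1] [[m2 Hm2] Ho2].
have ex x : a x - c x = (a x - b x) + (b x - c x) by rewrite addrA subrK.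
split; last by move=> x xL; rewrite ex Ho1 // Ho2 // addr0.
exists (m1 + m2) => x xL; rewrite ex Hm1 // Hm2 //.
have [_ _ aD] := RM; by rewrite aD opprD addrACA.
Qed.

Lemma part3 p (gT : finGroupType) (T : zmodType) (act : T -> gT -> T)
  (rho : gT -> gT -> T) (tL : {group gT} -> gT -> T)
  (Tr : {group gT} -> set (gT -> T)) :
  right_module act ->
  (forall L : {group gT}, calL act rho p L ->
     Tr L `<=` Z1 act L /\
     forall dl, Z1 act L dl ->
       exists! g, Tr L g /\ B1 act L (fun x => dl x - g x)) ->
  ([set E | exists (L : {group gT}) g,
       [/\ calL act rho p L, Tr L g & E = CL tL L g]]
   #= [set Lc : {group gT} * set (gT -> T) |
         calL act rho p Lc.1 /\ H1 act Lc.1 Lc.2]).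
Proof.
move=> RM Htr.
pose P := [set Lg : {group gT} * (gT -> T) | calL act rho p Lg.1 /\ Tr Lg.1 Lg.2].
pose cls (L : {group gT}) (g : gT -> T) :=
  [set d' | Z1 act L d' /\ B1 act L (fun x => d' x - g x)].
have e1 : [set E | exists (L : {group gT}) g,
       [/\ calL act rho p L, Tr L g & E = CL tL L g]]
   = (fun Lg => CL tL Lg.1 Lg.2) @` P.
  apply/seteqP; split.
  - by move=> E [L [g [HL Tg ->]]]; exists (L, g).
  - by move=> E [[L g] [HL Tg] <-]; exists L, g; split.
have e2 : [set Lc : {group gT} * set (gT -> T) |
         calL act rho p Lc.1 /\ H1 act Lc.1 Lc.2]
   = (fun Lg => (Lg.1, cls Lg.1 Lg.2)) @` P.
  apply/seteqP; split.
  - move=> [L C] [/= HL [dd Zdd ->]].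
    have [g [[Tg Bg] _]] := (Htr L HL).2 dd Zdd.
    exists (L, g) => //=; congr pair.
    apply/seteqP; split => d' [Zd' Bd']; split => //.
      by apply: (B1trans RM Bd'); apply: B1sym.
    exact: (B1trans RM Bd' Bg).
  - move=> _ [[L g] [HL Tg] <-]; split => //=.
    by exists g => //; exact: (Htr L HL).1 g Tg.
rewrite e1 e2.
apply: (card_eq_trans (inj_card_eq _) (card_esym (inj_card_eq _))).
- move=> [L g] [L' g']; rewrite !in_setE => -[HL Tg] [HL' Tg'] /= e.
  have eL : L = L'.
    apply/val_inj/setP => x; apply/idP/idP => xL.
      have : CL tL L g (x, tL L x + g x) by split.
      by rewrite e => -[].
    have : CL tL L' g' (x, tL L' x + g' x) by split.
    by rewrite -e => -[].
  subst L'; congr pair; apply: funext => x.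
  case xL: (x \in L).
    have : CL tL L g (x, tL L x + g x) by split.
    by rewrite e => -[_ /= h]; apply: (addrI (tL L x)).
  have [_ Ho] := (Htr L HL).1 g Tg; have [_ Ho'] := (Htr L HL).1 g' Tg'.
  by rewrite Ho ?Ho' ?xL.
- move=> [L g] [L' g']; rewrite !in_setE => -[HL Tg] [HL' Tg'] /= [eL].
  subst L' => e.
  have Zg' := (Htr L HL).1 g' Tg'.
  have : cls L g' g' by split => //; apply: B1refl.
  rewrite -e => -[_ Bg].
  have [h [_ uq]] := (Htr L HL).2 g' Zg'.
  have h1 := uq g' (conj Tg' (B1refl _ _ RM)).
  have h2 := uq g (conj Tg Bg).
  by rewrite -h1 h2.
Qed.

Theorem lemma6p1 (p d : nat) (gT : finGroupType) (T : zmodType)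
  (act : T -> gT -> T) (rho : gT -> gT -> T)
  (tL : {group gT} -> gT -> T) (Tr : {group gT} -> set (gT -> T)) :
  prime p ->
  pgroup p [set: gT]%SET ->
  iso_to_Zp_pow p d T ->
  right_module act ->
  Z2 act rho ->
  (* C_L is a complement to T in \overline{L}, for every L in \mathcal{L} *)
  (forall L : {group gT}, calL act rho p L ->
     subgroupS act rho (CL tL L (fun _ => 0))) ->
  (* Tr L = T^1(L,T) is a transversal of B^1(L,T) in Z^1(L,T) *)
  (forall L : {group gT}, calL act rho p L ->
     Tr L `<=` Z1 act L /\
     forall dl, Z1 act L dl ->
       exists! g, Tr L g /\ B1 act L (fun x => dl x - g x)) ->
  (* the objects C_L(gamma) of \overline{A}_p(S) are objects of A_p(S) *)
  (forall (L : {group gT}) g, calL act rho p L -> Tr L g ->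
     elemabS act rho p (CL tL L g)) /\
  (* semi-skeleton: every object of A_p(S) is isomorphic to one of them *)
  (forall E, elemabS act rho p E ->
     exists (L : {group gT}) g,
       [/\ calL act rho p L, Tr L g & Aiso act rho E (CL tL L g)]) /\
  (* number of objects = sum over L in \mathcal{L} of |H^1(L,T)| *)
  ([set E | exists (L : {group gT}) g,
       [/\ calL act rho p L, Tr L g & E = CL tL L g]]
   #= [set Lc : {group gT} * set (gT -> T) |
         calL act rho p Lc.1 /\ H1 act Lc.1 Lc.2]).
Proof.
move=> pp pG iso RM Z2r H0 Htr.
split; [|split].
- move=> L g HL Tg; apply: part1 => //; [exact: H0 | exact: (Htr L HL).1].
- by move=> E HE; apply: (part2 pp iso RM Z2r H0 Htr HE).
- exact: part3.
Qed.
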